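(* A graph $G$ admits a straight-line drawing with spanning ratio equal to $1$ if and only if $G$ contains a Hamiltonian path.
   Context: A drawing of a graph maps each vertex to a distinct point of the plane and each edge to a Jordan arc between its end-vertices; it is straight-line if every edge is drawn as the straight-line segment between its end-vertices (edges may pass through other vertices). In a straight-line drawing $\Gamma$, the length of a path is the sum of the Euclidean lengths of its edges, $\pi_\Gamma(u,v)$ is the minimum length of a path between $u$ and $v$, and $\|uv\|_\Gamma$ is the Euclidean distance between the points representing $u$ and $v$. The spanning ratio of $\Gamma$ is $\max_{u\neq v} \pi_\Gamma(u,v)/\|uv\|_\Gamma$ over all pairs of distinct vertices. *)

(* Defs.v *)
From HB Require Import structures.
From mathcomp Require Import all_boot all_order all_algebra.
From mathcomp Require Import all_classical all_reals ereal.
Set Implicit Arguments. Unset Strict Implicit. Unset Printing Implicit Defensive.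
Import Order.TTheory GRing.Theory Num.Theory.
Local Open Scope ring_scope.
Local Open Scope classical_set_scope.

Section Drawing.
Variables (R : realType) (V : finType).

Definition edist (p q : R * R) : R :=
  Num.sqrt ((p.1 - q.1) ^+ 2 + (p.2 - q.2) ^+ 2).

Definition drawing (f : V -> R * R) : Prop := injective f.

Fixpoint walk_len (f : V -> R * R) (x : V) (s : seq V) : R :=
  match s with
  | [::] => 0
  | y :: s' => edist (f x) (f y) + walk_len f y s'
  end.

(* pi_Gamma(u,v): minimum length of a path (walk) from u to v in g;
   +oo if there is none. *)
Definition graph_dist (g : rel V) (f : V -> R * R) (u v : V) : \bar R :=
  ereal_inf [set (walk_len f u s)%:E | s in [set s : seq V | path g u s && (last u s == v)]].

Definition spanning_ratio (g : rel V) (f : V -> R * R) : \bar R :=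
  ereal_sup [set (graph_dist g f uv.1 uv.2 * ((edist (f uv.1) (f uv.2))^-1)%:E)%E
            | uv in [set uv : V * V | uv.1 != uv.2]].

Definition hamiltonian_path (g : rel V) : Prop :=
  exists (x : V) (s : seq V),
    [/\ path g x s, uniq (x :: s) & size (x :: s) = #|V|].

End Drawing.

(* Main.v *)
Require Import Defs.
From mathcomp Require Import all_boot all_order all_algebra.
From mathcomp Require Import all_classical all_reals ereal.
From mathcomp Require Import ring lra.
Import Order.TTheory GRing.Theory Num.Theory.
Local Open Scope ring_scope.
Local Open Scope classical_set_scope.

Section Geo.
Variable R : realType.


Definition nrm (a1 a2 : R) : R := Num.sqrt (a1 ^+ 2 + a2 ^+ 2).

Lemma nrm_ge0 (a1 a2 : R) : 0 <= nrm a1 a2.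
Proof. exact: sqrtr_ge0. Qed.

Lemma nrm_sq (a1 a2 : R) : nrm a1 a2 ^+ 2 = a1 ^+ 2 + a2 ^+ 2.
Proof. by rewrite /nrm sqr_sqrtr // addr_ge0 // sqr_ge0. Qed.

Lemma cs (a1 a2 b1 b2 : R) : a1 * b1 + a2 * b2 <= nrm a1 a2 * nrm b1 b2.
Proof.
rewrite /nrm -sqrtrM ?addr_ge0 ?sqr_ge0 //.
apply: (le_trans (ler_norm _)).
rewrite -sqrtr_sqr ler_sqrt; last by rewrite mulr_ge0 // addr_ge0 // sqr_ge0.
have -> : (a1 ^+ 2 + a2 ^+ 2) * (b1 ^+ 2 + b2 ^+ 2) =
  (a1 * b1 + a2 * b2) ^+ 2 + (a1 * b2 - a2 * b1) ^+ 2 by ring.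
by rewrite lerDl sqr_ge0.
Qed.

Lemma tri (a1 a2 b1 b2 : R) : nrm (a1 + b1) (a2 + b2) <= nrm a1 a2 + nrm b1 b2.
Proof.
have h := cs a1 a2 b1 b2.
have ha := nrm_sq a1 a2. have hb := nrm_sq b1 b2.
have p1 := nrm_ge0 a1 a2. have p2 := nrm_ge0 b1 b2.
rewrite {1}/nrm -[X in _ <= X]ger0_norm ?addr_ge0 // -sqrtr_sqr ler_sqrt ?sqr_ge0 //.
nra.
Qed.

Lemma nrm_gt0 (a1 a2 : R) : (a1 != 0) || (a2 != 0) -> 0 < nrm a1 a2.
Proof.
move=> h; rewrite /nrm sqrtr_gt0.
case/orP: h => h.
  by rewrite ltr_pwDl ?sqr_ge0 // exprn_even_gt0.
by rewrite ltr_wpDl ?sqr_ge0 // exprn_even_gt0.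
Qed.

Lemma tri_eq (a1 a2 b1 b2 : R) : (a1 != 0) || (a2 != 0) -> (b1 != 0) || (b2 != 0) ->
  nrm a1 a2 + nrm b1 b2 <= nrm (a1 + b1) (a2 + b2) ->
  0 < a1 * b1 + a2 * b2 /\ a1 * b2 - a2 * b1 = 0.
Proof.
move=> /nrm_gt0 pa /nrm_gt0 pb h.
have ha := nrm_sq a1 a2. have hb := nrm_sq b1 b2.
have hab := nrm_sq (a1 + b1) (a2 + b2).
have p3 := nrm_ge0 (a1 + b1) (a2 + b2).
have h2 : nrm a1 a2 * nrm b1 b2 <= a1 * b1 + a2 * b2 by nra.
have hd : 0 < a1 * b1 + a2 * b2 by apply: lt_le_trans h2; exact: mulr_gt0.
split => //.
have id : (a1 ^+ 2 + a2 ^+ 2) * (b1 ^+ 2 + b2 ^+ 2) =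
  (a1 * b1 + a2 * b2) ^+ 2 + (a1 * b2 - a2 * b1) ^+ 2 by ring.
have h3 : (nrm a1 a2 * nrm b1 b2) ^+ 2 <= (a1 * b1 + a2 * b2) ^+ 2.
  by rewrite ler_sqr ?nnegrE ?mulr_ge0 ?nrm_ge0 // ltW.
rewrite exprMn ha hb id gerDl in h3.
apply/eqP; rewrite -sqrf_eq0 eq_le h3 sqr_ge0 //.
Qed.

Lemma lex_aux (a1 a2 b1 b2 : R) : 0 < a1 * b1 + a2 * b2 -> a1 * b2 - a2 * b1 = 0 ->
  (a1 + b1 < 0) || ((a1 + b1 == 0) && (a2 + b2 < 0)) ->
  ((a1 < 0) || ((a1 == 0) && (a2 < 0))) && ((b1 < 0) || ((b1 == 0) && (b2 < 0))).
Proof.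
move=> hd hc.
have e1 : b1 * (a1 * b1 + a2 * b2) = a1 * (b1 ^+ 2 + b2 ^+ 2).
  have : b1 * (a1 * b1 + a2 * b2) - a1 * (b1 ^+ 2 + b2 ^+ 2) = - b2 * (a1 * b2 - a2 * b1) by ring.
  by rewrite hc mulr0 => /eqP; rewrite subr_eq0 => /eqP.
have e2 : b2 * (a1 * b1 + a2 * b2) = a2 * (b1 ^+ 2 + b2 ^+ 2).
  have : b2 * (a1 * b1 + a2 * b2) - a2 * (b1 ^+ 2 + b2 ^+ 2) = b1 * (a1 * b2 - a2 * b1) by ring.
  by rewrite hc mulr0 => /eqP; rewrite subr_eq0 => /eqP.
have B : 0 < b1 ^+ 2 + b2 ^+ 2.
  rewrite ltNge; apply/negP => hB.
  have s1 : b1 ^+ 2 = 0 by have := sqr_ge0 b1; have := sqr_ge0 b2; lra.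
  have s2 : b2 ^+ 2 = 0 by have := sqr_ge0 b1; have := sqr_ge0 b2; lra.
  move/eqP: s1; rewrite sqrf_eq0 => /eqP s1.
  move/eqP: s2; rewrite sqrf_eq0 => /eqP s2.
  by move: hd; rewrite s1 s2 !mulr0 addr0 ltxx.
case/orP=> [h1 | /andP [/eqP h1 h2]].
  have ha : a1 < 0 by nra.
  have hb : b1 < 0 by nra.
  by rewrite ha hb.
have a0 : a1 = 0.
  have hb : b1 = - a1 by lra.
  move: e1; rewrite hb; nra.
have b0 : b1 = 0 by lra.
rewrite a0 b0 eqxx ltxx /=.
have ha : a2 < 0 by nra.
have hb : b2 < 0 by nra.
by rewrite ha hb.
Qed.
Definition lexlt (p q : R * R) : bool :=
  (p.1 < q.1) || ((p.1 == q.1) && (p.2 < q.2)).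

Lemma edistE (p q : R * R) : edist p q = nrm (p.1 - q.1) (p.2 - q.2).
Proof. by []. Qed.

Lemma edist_tri (p q r : R * R) : edist p q <= edist p r + edist r q.
Proof.
rewrite !edistE.
have -> : p.1 - q.1 = (p.1 - r.1) + (r.1 - q.1) by ring.
have -> : p.2 - q.2 = (p.2 - r.2) + (r.2 - q.2) by ring.
exact: tri.
Qed.

Lemma edist_gt0 (p q : R * R) : p != q -> 0 < edist p q.
Proof.
case: p q => [p1 p2] [q1 q2]; rewrite xpair_eqE negb_and => h.
rewrite edistE /=; apply: nrm_gt0.
by rewrite !subr_eq0.
Qed.

Lemma edist_sym (p q : R * R) : edist p q = edist q p.
Proof.
rewrite !edistE /nrm.
by rewrite -(sqrrN (q.1 - p.1)) -(sqrrN (q.2 - p.2)) !opprB.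
Qed.

Lemma edist_strict (p q r : R * R) : lexlt p q -> r != p -> r != q ->
  ~~ (lexlt p r && lexlt r q) -> edist p q < edist p r + edist r q.
Proof.
case: p q r => [p1 p2] [q1 q2] [r1 r2] hl hrp hrq hn.
rewrite lt_neqAle edist_tri andbT; apply/negP => /eqP he.
move: hrp hrq; rewrite !xpair_eqE !negb_and => hrp hrq.
have ha : (p1 - r1 != 0) || (p2 - r2 != 0) by rewrite !subr_eq0 ![p1 == _]eq_sym ![p2 == _]eq_sym.
have hb : (r1 - q1 != 0) || (r2 - q2 != 0) by rewrite !subr_eq0.
have hle : nrm (p1 - r1) (p2 - r2) + nrm (r1 - q1) (r2 - q2) <=
           nrm ((p1 - r1) + (r1 - q1)) ((p2 - r2) + (r2 - q2)).
  have -> : (p1 - r1) + (r1 - q1) = p1 - q1 by ring.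
  have -> : (p2 - r2) + (r2 - q2) = p2 - q2 by ring.
  by move: he; rewrite !edistE /= => ->.
have [hd hc] := tri_eq _ _ _ _ ha hb hle.
have hl' : ((p1 - r1) + (r1 - q1) < 0) || (((p1 - r1) + (r1 - q1) == 0) && ((p2 - r2) + (r2 - q2) < 0)).
  have -> : (p1 - r1) + (r1 - q1) = p1 - q1 by ring.
  have -> : (p2 - r2) + (r2 - q2) = p2 - q2 by ring.
  by rewrite !subr_lt0 subr_eq0.
move: (lex_aux _ _ _ _ hd hc hl'); rewrite !subr_lt0 !subr_eq0 => hh.
by move: hn; rewrite /lexlt /= hh.
Qed.
End Geo.
Arguments edist_tri {R}. Arguments edist_strict {R}. Arguments edist_gt0 {R}.
Arguments edist_sym {R}. Arguments edistE {R}. Arguments lexlt {R}.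

Section G.
Variables (R : realType) (V : finType) (g : rel V).

Lemma edist0 (p : R * R) : edist p p = 0.
Proof. by rewrite edistE !subrr /nrm expr0n /= addr0 sqrtr0. Qed.

Lemma walk_len_ge (f : V -> R * R) (s : seq V) (x : V) :
  edist (f x) (f (last x s)) <= walk_len f x s.
Proof.
elim: s x => [|y s IH] x /=; first by rewrite edist0.
apply: le_trans (edist_tri _ _ (f y)) _.
by rewrite lerD2l IH.
Qed.

Lemma finite_delta (P : V -> bool) (F : V -> R) (a : R) (s : seq V) :
  (forall w, P w -> a < F w) ->
  exists2 d, 0 < d & forall w, w \in s -> P w -> a + d <= F w.
Proof.
move=> H; elim: s => [|y s [d d0 IH]]; first by exists 1.
case Py: (P y).
  exists (Num.min d (F y - a)).
    by rewrite lt_min d0 subr_gt0 H.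
  move=> w; rewrite inE => /orP [/eqP -> _|ws Pw].
    have : Num.min d (F y - a) <= F y - a by rewrite ge_min lexx orbT.
    lra.
  apply: le_trans (IH w ws Pw); by rewrite lerD2l ge_min lexx.
exists d => // w; rewrite inE => /orP [/eqP -> |]; first by rewrite Py.
exact: IH.
Qed.

Lemma lexlt_irr (p : R * R) : lexlt p p = false.
Proof. by rewrite /lexlt !ltxx eqxx. Qed.

Lemma adj_of_ratio (f : V -> R * R) : irreflexive g -> injective f ->
  spanning_ratio g f = 1%E -> forall x y, lexlt (f x) (f y) ->
  (forall w, ~~ (lexlt (f x) (f w) && lexlt (f w) (f y))) -> g x y.
Proof.
move=> irr inj hsr x y hxy hbt; apply/negPn/negP => nxy.
have xy : x != y by apply/negP => /eqP e; move: hxy; rewrite e lexlt_irr.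
have hw : forall w, g x w -> edist (f x) (f y) < edist (f x) (f w) + edist (f w) (f y).
  move=> w gxw.
  apply: edist_strict => //.
  - by rewrite inj_eq //; apply/negP => /eqP e; move: gxw; rewrite e irr.
  - by rewrite inj_eq //; apply/negP => /eqP e; move: gxw; rewrite e (negbTE nxy).
have [d d0 hd] := finite_delta (g x) (fun w => edist (f x) (f w) + edist (f w) (f y))
(edist (f x) (f y)) (enum V) hw.
have lb : ((edist (f x) (f y) + d)%:E <= graph_dist g f x y)%E.
  apply: le_ereal_inf_tmp => _ [s /andP [hp hl] <-].
  case: s hp hl => [|w s] hp hl.
    by move: hl; rewrite /= (negbTE xy).
  move: hp hl => /= /andP [gxw hp] /eqP hl.
  rewrite lee_fin; apply: le_trans (hd w _ gxw) _; first by rewrite mem_enum.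
  by rewrite lerD2l -hl; exact: walk_len_ge.
have ub : (graph_dist g f x y * ((edist (f x) (f y))^-1)%:E <= 1)%E.
  rewrite -hsr; apply: ereal_sup_ubound; exists (x, y) => //.
have dp : 0 < edist (f x) (f y) by apply: edist_gt0; rewrite inj_eq.
have := le_trans (lee_wpmul2r _ lb) ub.
rewrite lee_fin invr_ge0 ltW // => /(_ isT).
rewrite -EFinM lee_fin mulrDl divff ?gt_eqF // => h.
have : 0 < d / edist (f x) (f y) by rewrite divr_gt0.
lra.
Qed.
Lemma lexE (p q : R * R) : lexlt p q = ((p : R *l R) < q)%O.
Proof.
rewrite ltEprodlexi /lexlt; case: p q => [p1 p2] [q1 q2] /=.
case: (ltgtP p1 q1) => //= e; subst; by rewrite ?ltxx ?lexx.
Qed.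

Lemma ham_of_adj (f : V -> R * R) : injective f ->
  (forall x y, lexlt (f x) (f y) ->
    (forall w, ~~ (lexlt (f x) (f w) && lexlt (f w) (f y))) -> g x y) ->
  (1 < #|V|)%N -> hamiltonian_path g.
Proof.
move=> inj adj hV.
pose lt := fun a b : V => ((f a : R *l R) < f b)%O.
pose le := fun a b : V => ((f a : R *l R) <= f b)%O.
have tot : total le by move=> a b; exact: le_total.
have tr : transitive le by move=> b a c; exact: le_trans.
have trl : transitive lt by move=> b a c; exact: lt_trans.
have aux : forall s x, path lt x s -> (forall w, lt x w -> w \in s) -> path g x s.
  elim=> [|y t IH] x //= /andP [lxy pt] hm; apply/andP; split.
    apply: adj; first by rewrite lexE.
    move=> w; rewrite !lexE; apply/negP => /andP [h1 h2].
    have := hm w h1; rewrite inE => /orP [/eqP e|wt].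
      by move: h2; rewrite e ltxx.
    have := order_path_min trl pt; move/allP => /(_ w wt).
    by rewrite /lt => h3; move: (lt_trans h2 h3); rewrite ltxx.
  apply: IH => // w hyw.
  have := hm w (trl _ _ _ lxy hyw); rewrite inE => /orP [/eqP e|] //.
  by move: hyw; rewrite /lt e ltxx.
have lelt : forall s x, path le x s -> uniq (x :: s) -> path lt x s.
  elim=> [|y t IH] x //= /andP [lxy pt] /andP [nx ut]; apply/andP; split.
    rewrite /lt lt_neqAle; apply/andP; split => //; rewrite inj_eq //.
    by apply/negP => /eqP e; move: nx; rewrite e inE eqxx.
  exact: IH.
pose s0 := sort le (enum V).
have us0 : uniq s0 by rewrite sort_uniq enum_uniq.
have ss0 : size s0 = #|V| by rewrite size_sort cardE.
have ms0 : forall w, w \in s0 by move=> w; rewrite mem_sort mem_enum.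
have so0 : sorted le s0 := sort_sorted tot _.
move: us0 ss0 ms0 so0; case: s0 => [|x s] us ss ms so.
  by move: hV; rewrite -ss.
exists x, s; split => //.
apply: aux; first exact: lelt.
move=> w hw; have := ms w; rewrite inE => /orP [/eqP e|] //.
by move: hw; rewrite /lt e ltxx.
Qed.
Lemma graph_dist_ge (f : V -> R * R) u v :
  ((edist (f u) (f v))%:E <= graph_dist g f u v)%E.
Proof.
apply: le_ereal_inf_tmp => _ [s /andP [hp /eqP hl] <-].
by rewrite lee_fin -hl; exact: walk_len_ge.
Qed.

Lemma graph_dist_le (f : V -> R * R) u v t :
  path g u t -> last u t == v -> (graph_dist g f u v <= (walk_len f u t)%:E)%E.
Proof.
move=> hp hl; apply: ge_ereal_inf; exists (walk_len f u t)%:E => //.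
by exists t => //; rewrite /= hp hl.
Qed.

Lemma edist_line (a b : nat) : edist ((a%:R : R), (0 : R)) (b%:R, 0) = `|a%:R - b%:R|.
Proof. by rewrite edistE /nrm /= subrr expr0n addr0 sqrtr_sqr. Qed.

Lemma line_walks (L : seq V) (x : V) (s : seq V) : L = x :: s -> path g x s -> symmetric g ->
  uniq L -> forall u v, u \in L -> v \in L ->
  exists t, [/\ path g u t, last u t == v &
    walk_len (fun w => ((index w L)%:R : R, 0 : R)) u t =
      edist ((index u L)%:R, 0) ((index v L)%:R, 0)].
Proof.
move=> EL hp sym uL.
pose f := fun w => ((index w L)%:R : R, 0 : R).
have fn : forall k, (k < size L)%N -> f (nth x L k) = (k%:R, 0).
  by move=> k hk; rewrite /f index_uniq.
have step : forall k, (k.+1 < size L)%N -> g (nth x L k) (nth x L k.+1).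
  move=> k hk; move/(pathP x): hp => /(_ k); rewrite EL /=; apply.
  by move: hk; rewrite EL.
have fw : forall d i, (i + d < size L)%N -> exists t, [/\ path g (nth x L i) t,
    last (nth x L i) t == nth x L (i + d) & walk_len f (nth x L i) t = d%:R].
  elim=> [|d IH] i hi; first by exists [::]; rewrite addn0.
  have hi' : (i.+1 + d < size L)%N by rewrite addSnnS.
  have [t [h1 h2 h3]] := IH i.+1 hi'.
  exists (nth x L i.+1 :: t); split => /=.
  - by rewrite h1 andbT step // (leq_ltn_trans _ hi) // -addn1 leq_add2l.
  - by rewrite -addSnnS.
  rewrite h3 fn ?fn ?(leq_ltn_trans _ hi) ?leq_addr //; last by rewrite -addn1 leq_add2l.
  by rewrite edist_line -addn1 natrD opprD addrA subrr add0r normrN normr1 -natr1 addrC.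
have bw : forall d i, (i + d < size L)%N -> exists t, [/\ path g (nth x L (i + d)) t,
    last (nth x L (i + d)) t == nth x L i & walk_len f (nth x L (i + d)) t = d%:R].
  elim=> [|d IH] i hi; first by exists [::]; rewrite addn0.
  have hi' : (i + d < size L)%N by apply: ltnW; rewrite -addnS.
  have [t [h1 h2 h3]] := IH i hi'.
  have hk : ((i + d).+1 < size L)%N by rewrite -addnS.
  exists (nth x L (i + d) :: t); rewrite addnS; split.
  - by rewrite /= h1 andbT sym step.
  - by [].
  rewrite /= h3 fn // fn //.
  by rewrite edist_line -addn1 natrD addrAC subrr add0r normr1 -natr1 addrC.
move=> u v hu hv.
have eu : u = nth x L (index u L) by rewrite nth_index.
have ev : v = nth x L (index v L) by rewrite nth_index.
have iu : (index u L < size L)%N by rewrite index_mem.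
have iv : (index v L < size L)%N by rewrite index_mem.
case: (leqP (index u L) (index v L)) => hle.
  have hh : (index u L + (index v L - index u L) < size L)%N by rewrite subnKC.
  have [t [h1 h2 h3]] := fw (index v L - index u L)%N (index u L) hh.
  rewrite subnKC // -eu -ev in h1 h2 h3.
  exists t; split; [by [] | by [] | rewrite h3 edist_line -normrN opprB -natrB //].
  by rewrite normr_nat.
have hh : (index v L + (index u L - index v L) < size L)%N by rewrite (subnKC (ltnW hle)).
have [t [h1 h2 h3]] := bw (index u L - index v L)%N (index v L) hh.
rewrite (subnKC (ltnW hle)) -eu -ev in h1 h2 h3.
exists t; split; [by [] | by [] | rewrite h3 edist_line -(natrB _ (ltnW hle))].
by rewrite normr_nat.
Qed.
End G.

Theorem lemma1 (R : realType) (V : finType) (g : rel V) :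
  symmetric g -> irreflexive g -> (1 < #|V|)%N ->
  ((exists f : V -> R * R, drawing f /\ spanning_ratio g f = 1%E)
   <-> hamiltonian_path g).
Proof.
move=> sym irr hV; split.
  move=> [f [inj hsr]].
  exact: (@ham_of_adj R V g f inj (@adj_of_ratio R V g f irr inj hsr) hV).
move=> [x [s [hp uL sz]]].
have [y ys] : exists y, y \in s.
  case: s hp uL sz => [|y s'] _ _ sz; first by move: hV; rewrite -sz.
  by exists y; rewrite inE eqxx.
set L := x :: s.
have allL : forall w, w \in L.
  move=> w; apply/negPn/negP => nw.
  have c0 : #|[predC L]| = 0%N.
    have := cardC (mem L); rewrite (card_uniqP uL) sz => h.
    by apply/eqP; rewrite -(eqn_add2l #|V|) addn0 h.
  by move: (card0_eq c0 w); rewrite !inE nw.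
pose f := fun w => ((index w L)%:R : R, 0 : R).
have inj : injective f.
  move=> u v h.
  have e : index u L = index v L.
    by apply/eqP; rewrite -(eqr_nat R); apply/eqP; exact: (congr1 fst h).
  by rewrite -(nth_index x (allL u)) e nth_index.
have term : forall u v, u != v ->
    (graph_dist g f u v * ((edist (f u) (f v))^-1)%:E = 1)%E.
  move=> u v uv.
  have [t [h1 h2 h3]] := @line_walks R V g L x s (erefl L) hp sym uL u v (allL u) (allL v).
  have e : graph_dist g f u v = (edist (f u) (f v))%:E.
    apply/le_anti; rewrite (@graph_dist_ge R V g f u v) andbT.
    by have := @graph_dist_le R V g f u v t h1 h2; rewrite h3.
  rewrite e -EFinM divff //.
  by apply/lt0r_neq0/edist_gt0; rewrite inj_eq.
exists f; split => //.
apply/le_anti/andP; split.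
  apply: ge_ereal_sup => _ [[u v] /= uv <-].
  by rewrite term.
apply: le_ereal_sup_tmp; exists 1%E => //.
have xy : x != y by apply/negP => /eqP e; move: uL; rewrite /= e ys.
by exists (x, y); [exact: xy | exact: term x y xy].
Qed.
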